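(* There are infinitely many positive integers $N$ for which there are infinitely many pairs $(A,B)$ of antipalindromic numbers with $N=A/B$.
   Context: A positive integer $n$ is antipalindromic if its binary representation $w=w_1\cdots w_L$ (most significant digit first, no leading zeros) has even length $L$ and satisfies $w_i+w_{L+1-i}=1$ for all $i$. *)

(* Defs.v *)
From mathcomp Require Import all_boot.

Definition bitn (n j : nat) : nat := (n %/ 2 ^ j) %% 2.

Definition binlen (n : nat) : nat := (trunc_log 2 n).+1.

(* n is antipalindromic: n > 0, its binary word w_1...w_L (MSB first) has
   even length L and w_i + w_{L+1-i} = 1 for all i.  With w_i = bitn n (L - i),
   this is bitn n j + bitn n (L-1-j) = 1 for all j < L. *)
Definition antipalindromic (n : nat) : Prop :=
  0 < n /\ ~~ odd (binlen n) /\
  forall j, j < binlen n -> bitn n j + bitn n (binlen n - 1 - j) = 1.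

(* Main.v *)
Require Import Defs.
From mathcomp Require Import all_boot.
From mathcomp Require Import zify.

Fixpoint valr (s : seq bool) : nat :=
  if s is b :: s' then b + 2 * valr s' else 0.

Lemma valr_cat u v : valr (u ++ v) = valr u + 2 ^ (size u) * valr v.
Proof.
elim: u => [|b u IH] /=; first by rewrite expn0 mul1n.
rewrite IH expnS; lia.
Qed.

Lemma valr_lt s : valr s < 2 ^ (size s).
Proof. elim: s => [|b s IH] //=; rewrite expnS; case: b; lia. Qed.

Lemma bitn_valr s j : bitn (valr s) j = nth false s j.
Proof.
elim: s j => [|b s IH] j /=.
  by rewrite /bitn div0n mod0n; case: j.
case: j => [|j] /=.
  by rewrite /bitn expn0 divn1; case: b => /=; lia.
rewrite -IH /bitn expnS divnMA; congr (_ %% 2); congr (_ %/ _).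
case: b => /=; lia.
Qed.

Lemma anti_of_word s : last false s = true -> ~~ odd (size s) ->
  rev (map negb s) = s -> antipalindromic (valr s).
Proof.
case/lastP: s => [|t b] //= Hl; rewrite last_rcons in Hl; subst b.
set s := rcons t true => Hodd Hrc.
have Hv : valr s = valr t + 2 ^ size t.
  by rewrite /s -cats1 valr_cat /= muln1.
have Hlt := valr_lt s.
have Hbl : binlen (valr s) = size s.
  rewrite /binlen /s size_rcons (@trunc_log_eq 2 (size t)) //.
  apply/andP; split; first by rewrite Hv leq_addl.
  by move: Hlt; rewrite /s size_rcons.
split; first by rewrite Hv addn_gt0 expn_gt0 orbT.
rewrite Hbl; split => // j Hj.
rewrite !bitn_valr.
have E : nth false s j = ~~ nth false s (size s - j.+1).
  rewrite -{1}Hrc nth_rev ?size_map //.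
  rewrite (nth_map false) //.
  have : 0 < size s by lia.
  lia.
rewrite E (_ : size s - 1 - j = size s - j.+1); last by lia.
by case: (nth false s _).
Qed.

Definition rc (s : seq bool) := rev (map negb s).

Lemma rc_cat u v : rc (u ++ v) = rc v ++ rc u.
Proof. by rewrite /rc map_cat rev_cat. Qed.

Lemma rc_nseq n b : rc (nseq n b) = nseq n (~~ b).
Proof. by rewrite /rc map_nseq rev_nseq. Qed.

Definition rep k (w : seq bool) := flatten (nseq k w).

Lemma rep_comm k w : rep k w ++ w = w ++ rep k w.
Proof.
elim: k => [|k IH]; first by rewrite /= cats0.
by rewrite /rep /= -catA; congr (_ ++ _).
Qed.

Lemma rc_rep k w : rc w = w -> rc (rep k w) = rep k w.
Proof.
move=> Hw; elim: k => [|k IH] //.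
by rewrite /rep /= rc_cat -/(rep k w) IH Hw rep_comm.
Qed.

Lemma size_rep k w : size (rep k w) = k * size w.
Proof. elim: k => [|k IH] //; rewrite /rep /= size_cat; rewrite /rep in IH; rewrite IH; lia. Qed.

Lemma valr_rep k w :
  valr (rep k.+1 w) = valr w + 2 ^ (size w) * valr (rep k w).
Proof. by rewrite /rep /= valr_cat. Qed.

Lemma valr_ones n : valr (nseq n true) = 2 ^ n - 1.
Proof.
elim: n => [|n IH] //=; rewrite IH expnS.
have := expn_gt0 2 n; lia.
Qed.

Lemma valr_zeros n : valr (nseq n false) = 0.
Proof. by elim: n => //= n ->. Qed.

Lemma last_ones y n : last y (nseq n.+1 true) = true.
Proof. by elim: n y => [|n IH] y //=; apply: IH. Qed.

Definition Xw r := nseq r.+2 true ++ nseq r.+2 false.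
Definition Yw r := [:: true] ++ nseq r false ++ [:: true; false] ++ nseq r true ++ [:: false].
Definition Bw r k := [:: false] ++ rep k (Xw r) ++ [:: true].
Definition Aw r k := nseq r.+1 false ++ rep k (Yw r) ++ nseq r.+1 true.

Lemma rc_X r : rc (Xw r) = Xw r.
Proof. by rewrite /Xw rc_cat !rc_nseq. Qed.

Lemma rc_Y r : rc (Yw r) = Yw r.
Proof.
rewrite /Yw !rc_cat !rc_nseq /=.
have -> : rc [:: true; false] = [:: true; false] by [].
have -> : rc [:: true] = [:: false] by [].
by rewrite -!catA.
Qed.

Lemma size_X r : size (Xw r) = (r.+2).*2.
Proof. rewrite /Xw size_cat !size_nseq; lia. Qed.

Lemma size_Y r : size (Yw r) = (r.+2).*2.
Proof. rewrite /Yw !size_cat !size_nseq /=; lia. Qed.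

Lemma valr_XY r k : valr (rep k (Yw r)) = (2 * 2 ^ r - 1) * valr (rep k (Xw r)).
Proof.
have HX : valr (Xw r) = 4 * 2 ^ r - 1.
  rewrite /Xw valr_cat valr_zeros valr_ones !expnS; lia.
have HY : valr (Yw r) = (2 * 2 ^ r - 1) * (4 * 2 ^ r - 1).
  rewrite /Yw !valr_cat /= !valr_zeros !valr_ones ?size_cat !size_nseq /=.
  rewrite expn1 (_ : 2 ^ 2 = 4) //; have := expn_gt0 2 r; set R := 2 ^ r; nia.
elim: k => [|k IH]; first by rewrite muln0.
rewrite !valr_rep IH HX HY size_X size_Y; lia.
Qed.

Theorem theorem20 :
  forall M : nat, exists N : nat, M < N /\
    forall K : nat, exists A B : nat,
      K < B /\ antipalindromic A /\ antipalindromic B /\ A = N * B.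
Proof.
move=> M.
have HR := expn_gt0 2 M.
have HMR : M < 2 ^ M by apply: ltn_expl.
exists (2 ^ M * (2 * 2 ^ M - 1)); split; first by nia.
move=> K.
exists (valr (Aw M K)), (valr (Bw M K)).
have HE : 2 ^ K <= 2 ^ (K * (M.+2).*2) by rewrite leq_pexp2l //; lia.
have HK : K < 2 ^ K by apply: ltn_expl.
have HB : valr (Bw M K) = 2 * (valr (rep K (Xw M)) + 2 ^ (K * (M.+2).*2)).
  by rewrite /Bw !valr_cat /= size_rep size_X; lia.
have HA : valr (Aw M K) = 2 * 2 ^ M * (valr (rep K (Yw M)) + 2 ^ (K * (M.+2).*2) * (2 * 2 ^ M - 1)).
  rewrite /Aw !valr_cat valr_zeros valr_ones size_nseq size_rep size_Y expnS; lia.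
split; first by rewrite HB; lia.
split.
  apply: anti_of_word.
  - by rewrite /Aw !last_cat last_ones.
  - rewrite /Aw !size_cat !size_nseq size_rep size_Y.
    have -> : M.+1 + (K * (M.+2).*2 + M.+1) = (M.+1 + K * M.+2).*2 by lia.
    by rewrite odd_double.
  - by rewrite -/(rc _) /Aw !rc_cat !rc_nseq rc_rep ?rc_Y // catA.
split.
  apply: anti_of_word.
  - by rewrite /Bw !last_cat.
  - rewrite /Bw !size_cat size_rep size_X /=.
    by rewrite negbK add0n addn1 /= -doubleMr odd_double.
  - by rewrite -/(rc _) /Bw !rc_cat rc_rep ?rc_X // catA.
rewrite HA HB valr_XY.
set R := 2 ^ M; set c := 2 * R - 1; set E := 2 ^ _; set T := valr _.
nia.
Qed.
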